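(* Let $p$ be such that $p^*=\frac{p}{p-1}>0$, let $\alpha\in\mathbb{R}\setminus[1,2]$, and let $x_0\in(0,\infty)$. Set $a=\frac{\alpha-1}{(\alpha-2)p^*}$, $$K=\frac{a_{p,1}}{p^*}|\alpha-2|^{\frac{1}{\alpha-2}},\qquad s_0=K\,\Gamma\big(a,x_0^{p^*}\big).$$ Then the up transform of $g_{p,1}$, computed with the change of variable $s(x)=\int_x^{x_0}|(\alpha-2)v|^{\frac1{\alpha-2}}g_{p,1}(v)\,dv$, is $$\mathcal{U}_\alpha[g_{p,1}](s)=|\alpha-2|^{\frac{1}{2-\alpha}}\left|\Gamma^{-1}\!\left(a,\frac{s+s_0}{K}\right)\right|^{\frac{1}{p^*(2-\alpha)}}.$$
   Context: $g_{p,1}(x)=a_{p,1}e^{-x^{p^*}}$ for $x\in[0,\infty)$, with $a_{p,1}=\frac{p^*}{2\Gamma(1/p^* )}$ (the restriction to the half-line of the symmetric stretched Gaussian). $\Gamma(a,z)=\int_z^\infty w^{a-1}e^{-w}\,dw$ is the upper incomplete Gamma function and $\Gamma^{-1}(a,\cdot)$ denotes its inverse with respect to the second argument. Up transform: for $\alpha\ne2$, $\mathcal{U}_\alpha[f](s)=|(\alpha-2)x(s)|^{1/(2-\alpha)}$, where $x(s)$ is the inverse of the change of variable $s(x)$ (satisfying $s'(x)=-|(\alpha-2)x|^{1/(\alpha-2)}f(x)$). *)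

(* Defs.v *)
From mathcomp Require Import all_boot all_order all_algebra.
From mathcomp Require Import all_classical all_reals all_analysis.
Set Implicit Arguments. Unset Strict Implicit. Unset Printing Implicit Defensive.
Import Order.TTheory GRing.Theory Num.Theory.
Import numFieldNormedType.Exports.
Local Open Scope classical_set_scope.
Local Open Scope ring_scope.

Section Defs.
Variable R : realType.
Local Notation mu := (@lebesgue_measure R).

Definition pstar (p : R) : R := p / (p - 1).

Definition upper_gamma (a z : R) : R :=
  \int[mu]_(w in `[z, +oo[) (w `^ (a - 1) * expR (- w)).

Definition Gamma (a : R) : R := upper_gamma a 0.

Definition upper_gamma_inv (a y : R) : R :=
  xget 0 [set z | 0 <= z /\ upper_gamma a z = y].

Definition a_p1 (p : R) : R := pstar p / (2 * Gamma (1 / pstar p)).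

(* g_{p,1}(x) = a_{p,1} e^{-x^{pstar}}, used for x in [0,∞) *)
Definition g_p1 (p : R) (x : R) : R := a_p1 p * expR (- (x `^ pstar p)).

Definition oint (f : R -> R) (a b : R) : R :=
  if a <= b then \int[mu]_(t in `[a, b]) f t
  else - \int[mu]_(t in `[b, a]) f t.

Definition chvar (alpha : R) (f : R -> R) (x0 : R) (x : R) : R :=
  oint (fun v => `|(alpha - 2) * v| `^ (1 / (alpha - 2)) * f v) x x0.

Definition up_transform (alpha : R) (f : R -> R) (x0 : R) (s : R) : R :=
  `|(alpha - 2) * xget 0 [set x | 0 < x /\ chvar alpha f x0 x = s]| `^ (1 / (2 - alpha)).

End Defs.

(* Main.v *)
Require Import Defs.
From mathcomp Require Import all_boot all_order all_algebra.
From mathcomp Require Import all_classical all_reals all_analysis.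
From mathcomp Require Import measurable_realfun.
From mathcomp Require Import ring lra.
Import Order.TTheory GRing.Theory Num.Theory.
Import numFieldNormedType.Exports.
Local Open Scope classical_set_scope.
Local Open Scope ring_scope.
Lemma powR_cont (R : realType) (c x : R) : 0 < x -> {for x, continuous (fun w : R => w `^ c)}.
Proof.
move=> x0; apply: differentiable_continuous; apply/derivable1_diffP.
by apply: derivable_powR; rewrite in_itv/= andbT.
Qed.

Lemma hcont (R : realType) (a x : R) : 0 < x ->
  {for x, continuous (fun w : R => w `^ (a-1) * expR (- w))}.
Proof.
move=> x0; apply: continuousM; first exact: powR_cont.
apply: continuous_comp; [exact: continuousN | exact: continuous_expR].
Qed.
Lemma dpow_cont (R : realType) (q x : R) : 0 < x ->
  {for x, continuous ((powR (R:=R))^~ q)^`()%classic}.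
Proof.
move=> x0.
have E : {near x, (fun y => q * y `^ (q - 1)) =1 ((powR (R:=R))^~ q)^`()%classic}.
  near=> y; rewrite powR_derive1 // in_itv/= andbT.
  near: y; exact: lt_nbhsr.
have Ex : ((powR (R:=R))^~ q)^`()%classic x = q * x `^ (q - 1).
  by rewrite powR_derive1 // in_itv/= andbT.
rewrite /prop_for /continuous_at Ex.
apply: cvg_trans; first exact: near_eq_cvg E.
apply: (@continuousM R R (fun=> q) (fun y => y `^ (q-1)) x); first exact: cvg_cst.
exact: powR_cont.
Unshelve. all: by end_near. Qed.
Lemma subst_pow (R : realType) (q a u v : R) : 0 < q -> 0 < u -> u <= v ->
  (\int[lebesgue_measure]_(w in `[(u `^ q)%R, (v `^ q)%R]) (w `^ (a-1) * expR (- w))%R%:E =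
   \int[lebesgue_measure]_(t in `[u, v])
      ((t `^ q) `^ (a-1) * expR (- t `^ q) * (q * t `^ (q-1)))%R%:E)%E.
Proof.
move=> q0 u0 uv.
have u'0 : 0 < u `^ q by apply: powR_gt0.
rewrite (@integration_by_substitution_increasing R ((@powR R)^~ q)
   (fun w => w `^ (a-1) * expR (- w)) u v uv).
- apply: eq_integral => t; rewrite inE/= in_itv/= => /andP[ut _].
  have t0 : 0 < t by exact: (lt_le_trans u0 ut).
  by rewrite !fctE /= powR_derive1 // in_itv/= andbT.
- move=> x y; rewrite !in_itv/= => /andP[ux _] /andP[uy _] xy.
  apply: gt0_ltr_powR => //; rewrite nnegrE ltW //.
  + exact: (lt_le_trans u0).
  + exact: (lt_le_trans u0).
- move=> x; rewrite in_itv/= => /andP[ux _]; apply: dpow_cont.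
  exact: (lt_trans u0).
- apply/cvg_ex; eexists; apply: cvg_at_right_filter; exact: dpow_cont.
- apply/cvg_ex; eexists; apply: cvg_at_left_filter; apply: dpow_cont.
  exact: (lt_le_trans u0).
- split.
  + move=> x; rewrite in_itv/= => /andP[ux _]; apply: derivable_powR.
    by rewrite in_itv/= andbT (lt_trans u0).
  + by apply: cvg_at_right_filter; exact: powR_cont.
  + by apply: cvg_at_left_filter; apply: powR_cont; exact: (lt_le_trans u0).
- apply: continuous_in_subspaceT => x; rewrite inE/= in_itv/= => /andP[ux _].
  apply: hcont; exact: (lt_le_trans u'0).
Qed.
Lemma int01 (R : realType) (b : R) : 0 < b ->
  (\int[lebesgue_measure]_(w in `]0%R, 1%R]) (b * w `^ (b-1))%:E <= 1)%E.
Proof.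
move=> b0.
set f := fun w : R => b * w `^ (b-1).
have f0 w : 0 <= f w by rewrite /f; apply: mulr_ge0; [exact: ltW | exact: powR_ge0].
have mf : measurable_fun setT f.
  apply: (@measurable_realfun.measurable_funM _ _ _ _ (fun=> b) (fun w => w `^ (b-1))).
    exact: measurable_cst.
  exact: measurable_realfun.measurable_powR.
pose D : set R := [set` `]0%R, 1%R]].
pose A := fun n : nat => [set` `[(n.+1%:R)^-1, 1%R]] : set R.
pose g := fun n : nat => ((EFin \o f) \_ (A n) : R -> \bar R).
have mg n : measurable_fun D (g n).
  apply: measurable_funTS; apply/(measurable_restrictT _ _).1.
    exact: measurable_itv.
  by apply/measurable_EFinP; exact: measurable_funTS.
have g0 n x : D x -> (0 <= g n x)%E.
  by move=> _; rewrite /g patchE; case: ifP => _ //=; rewrite lee_fin.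
have ndg : forall x, D x -> nondecreasing_seq (g^~ x).
  move=> x _ m n mn; rewrite /g !patchE.
  case: ifPn => xm; last by case: ifP => _ //=; rewrite lee_fin.
  rewrite ifT //; move: xm; rewrite !inE /A /= !in_itv/= => /andP[mx ->].
  rewrite andbT (le_trans _ mx) // lef_pV2 ?posrE ?ltr0n // ler_nat.
  by [].
have limg x : D x -> limn (g^~ x) = (f x)%:E.
  rewrite /D /= in_itv/= => /andP[x0 x1]; apply: lim_near_cst => //.
  near=> n; rewrite /g patchE ifT // inE /A /= in_itv/= x1 andbT ltW //.
  near: n; exact: (near_infty_natSinv_lt (PosNum x0)).
have -> : (\int[lebesgue_measure]_(w in `]0%R, 1%R]) (f w)%:E =
   \int[lebesgue_measure]_(w in D) limn (g^~ w))%E.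
  by apply: eq_integral => x; rewrite inE => /limg ->.
have mD : measurable D by exact: measurable_itv.
rewrite (@monotone_convergence _ _ _ lebesgue_measure _ mD g mg g0 ndg).
apply: lime_le.
  apply: ereal_nondecreasing_is_cvgn => m n mn.
  apply: ge0_le_integral => //; [exact: g0 | exact: mg | exact: mg | ].
  by move=> x xD; apply: ndg.
near=> n.
have n1 : (1 <= n)%N by near: n; exists 1%N.
have e0 : 0 < (n.+1%:R)^-1 :> R by rewrite invr_gt0 ltr0n.
have e1 : (n.+1%:R)^-1 < 1 :> R by rewrite invf_lt1 ?ltr0n // ltr1n ltnS.
rewrite /g -integral_mkcondr.
have -> : D `&` A n = A n.
  apply/setIidr => x; rewrite /A /D /= !in_itv/= => /andP[ex ->].
  by rewrite andbT (lt_le_trans e0 ex).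
rewrite (@continuous_FTC2 _ f ((@powR R)^~ b)) //.
- by rewrite powR1 -EFinB lee_fin gerBl powR_ge0.
- apply: continuous_in_subspaceT => x; rewrite inE/= in_itv/= => /andP[ex _].
  apply: (@continuousM R R (fun=> b) (fun y => y `^ (b-1)) x); first exact: cvg_cst.
  exact: powR_cont (lt_le_trans e0 ex).
- split.
  + move=> x; rewrite in_itv/= => /andP[ex _]; apply: derivable_powR.
    by rewrite in_itv/= andbT (lt_trans e0).
  + by apply: cvg_at_right_filter; exact: powR_cont.
  + by apply: cvg_at_left_filter; apply: powR_cont.
- move=> x; rewrite in_itv/= => /andP[ex _].
  by rewrite powR_derive1 // in_itv/= andbT (lt_trans e0).
Unshelve. all: by end_near.
Qed.
Local Open Scope ring_scope.
Lemma powR_le_exp (R : realType) (k w : R) : 0 < k -> 0 <= w ->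
  w `^ k <= (2*k) `^ k * expR (w / 2).
Proof.
move=> k0 w0.
have k2 : 0 < 2 * k by rewrite mulr_gt0.
have y0 : 0 <= w / (2 * k) by rewrite divr_ge0 // ltW.
have eq1 : w `^ k = (2*k) `^ k * (w/(2*k)) `^ k.
  rewrite -(powRM _ (ltW k2) y0).
  by rewrite [2 * k * _]mulrC divfK // gt_eqF.
rewrite eq1 ler_wpM2l ?powR_ge0 //.
have -> : w / 2 = (w / (2 * k)) * k.
  by field; rewrite gt_eqF.
rewrite (expRM (w / (2*k)) k); apply: ge0_ler_powR; [exact: ltW | exact: y0 | rewrite nnegrE; exact: expR_ge0 | ].
by rewrite (le_trans _ (expR_ge1Dx _)) // lerDr.
Qed.

Lemma h_le_exp (R : realType) (a k w : R) : a - 1 <= k -> 0 < k -> 1 <= w ->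
  w `^ (a - 1) * expR (- w) <=
  (2 * (2 * k) `^ k) * ((2^-1) * expR (- 2^-1 * w)).
Proof.
move=> ak k0 w1.
have w0 : 0 <= w by rewrite (le_trans _ w1).
have h1 : w `^ (a - 1) <= w `^ k by apply: ler_powR.
have -> : (2 * (2 * k) `^ k) * ((2^-1) * expR (- 2^-1 * w)) =
    (2 * k) `^ k * expR (w / 2) * expR (- w).
  have E : expR (- 2^-1 * w) = expR (w / 2) * expR (- w) :> R.
    by rewrite -expRD; congr expR; field.
  by rewrite E; field.
apply: ler_wpM2r; first exact: expR_ge0.
exact: (le_trans h1 (@powR_le_exp R k w k0 w0)).
Qed.

Lemma h_meas (R : realType) (a : R) :
  measurable_fun setT (fun w : R => w `^ (a-1) * expR (- w)).
Proof.
apply: (@measurable_funM _ _ _ _ (fun w => w `^ (a-1)) (fun w => expR (- w))).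
  exact: measurable_powR.
apply: continuous_measurable_fun => x.
apply: continuous_comp; [exact: continuousN | exact: continuous_expR].
Qed.

Lemma integ01 (R : realType) (a : R) : 0 < a ->
  lebesgue_measure.-integrable `]0%R, 1%R]
    (EFin \o (fun w : R => w `^ (a-1) * expR (- w))).
Proof.
move=> a0.
have mg : measurable_fun setT (fun w : R => a * w `^ (a-1)).
  apply: (@measurable_funM _ _ _ _ (fun=> a) (fun w => w `^ (a - 1))).
    exact: measurable_cst.
  exact: measurable_powR.
have ib : lebesgue_measure.-integrable `]0%R, 1%R]
    (EFin \o (fun w : R => a * w `^ (a-1))).
  apply/integrableP; split.
    by apply/measurable_EFinP; exact: measurable_funTS.
  under eq_integral => x _ do rewrite /= ger0_norm ?mulr_ge0 ?powR_ge0 ?ltW //.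
  exact: (le_lt_trans (@int01 R a a0) (ltry _)).
apply: (@le_integrable _ _ _ lebesgue_measure _ (measurable_itv _) _ (fun x => (a^-1)%:E * (a * x `^ (a-1))%:E)%E).
- by apply: measurable_funTS; apply/measurable_EFinP; exact: h_meas.
- move=> x; rewrite /= in_itv/= => /andP[x0 x1].
  rewrite lee_fin mulrA mulVf ?gt_eqF // mul1r (ger0_norm (powR_ge0 _ _)).
  rewrite ger0_norm; last by apply: mulr_ge0; [exact: powR_ge0 | exact: expR_ge0].
  rewrite ler_piMr ?powR_ge0 //.
  by rewrite expR_le1 oppr_le0 ltW.
- exact: (integrableZl _ (a^-1) ib).
Qed.

Lemma integ1y (R : realType) (a : R) :
  lebesgue_measure.-integrable `]1%R, +oo[
    (EFin \o (fun w : R => w `^ (a-1) * expR (- w))).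
Proof.
pose k := `|a - 1| + 1.
have k0 : 0 < k by rewrite /k ltr_wpDl.
have ak : a - 1 <= k by rewrite /k (le_trans (ler_norm _)) // lerDl.
pose M := 2 * (2 * k) `^ k.
have h2 : (0 : R) < 2^-1 by rewrite invr_gt0.
apply: (@le_integrable _ _ _ lebesgue_measure _ (measurable_itv _) _
  (fun x => M%:E * (exponential_pdf (2^-1) x)%:E)%E).
- by apply: measurable_funTS; apply/measurable_EFinP; exact: h_meas.
- move=> x; rewrite /= in_itv/= andbT => x1.
  have x0 : 0 <= x by rewrite ltW // (lt_trans _ x1).
  rewrite lee_fin exponential_pdfE //=.
  rewrite ger0_norm; last by apply: mulr_ge0; [exact: powR_ge0 | exact: expR_ge0].
  rewrite ger0_norm; last first.
    apply: mulr_ge0; first by rewrite /M mulr_ge0 ?powR_ge0.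
    by apply: mulr_ge0; [exact: ltW | exact: expR_ge0].
  exact: (@h_le_exp R a k x ak k0 (ltW x1)).
- apply: (@integrableZl _ _ _ lebesgue_measure _ (measurable_itv _) M (EFin \o exponential_pdf (2^-1))).
  apply: (@integrableS _ _ _ lebesgue_measure setT) => //.
  exact: integrable_exponential_pdf.
Qed.

Lemma integ0y (R : realType) (a : R) : 0 < a ->
  lebesgue_measure.-integrable `]0%R, +oo[
    (EFin \o (fun w : R => w `^ (a-1) * expR (- w))).
Proof.
move=> a0.
have mh : measurable_fun setT (EFin \o (fun w : R => w `^ (a-1) * expR (- w))).
  by apply/measurable_EFinP; exact: h_meas.
apply/integrableP; split; first exact: measurable_funTS.
rewrite (@itv_bndbnd_setU _ _ _ (BRight 1%R)) //.
rewrite ge0_integral_setU //=.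
- move/integrableP: (@integ01 R a a0) => [_ I1].
  move/integrableP: (@integ1y R a) => [_ I2].
  exact: lte_add_pinfty.
- apply: measurable_funTS; apply/measurable_EFinP.
  apply: (@measurableT_comp _ _ _ _ _ _ (@Num.Def.normr _ R)); first exact: normr_measurable.
  exact: h_meas.
- apply/disj_set2P; rewrite -subset0 => x /= [].
  rewrite !in_itv/= => /andP[_ x1] /andP[x1' _].
  by move: (lt_le_trans x1' x1); rewrite ltxx.
- by rewrite bnd_simp.
Qed.

Lemma integzy (R : realType) (a z : R) : 0 < a -> 0 <= z ->
  lebesgue_measure.-integrable `[z, +oo[
    (EFin \o (fun w : R => w `^ (a-1) * expR (- w))).
Proof.
move=> a0; rewrite le_eqVlt => /predU1P[<-|z0].
  have /integrableP[mh fin] := @integ0y R a a0.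
  apply/integrableP; split.
    apply: measurable_funTS; apply/measurable_EFinP; exact: h_meas.
  rewrite -integral_itv_obnd_cbnd //.
  apply: measurable_funTS; apply/measurable_EFinP.
  apply: (@measurableT_comp _ _ _ _ _ _ (@Num.Def.normr _ R)); first exact: normr_measurable.
  exact: h_meas.
apply: (@integrableS _ _ _ lebesgue_measure `]0%R, +oo[) => //; last exact: integ0y.
move=> x /=; rewrite !in_itv/= !andbT => zx.
exact: (lt_le_trans z0 zx).
Qed.

Lemma powR_lb (R : realType) (c m v w : R) : 0 < m -> m <= w -> w <= v ->
  Order.min (m `^ c) (v `^ c) <= w `^ c.
Proof.
move=> m0 mw wv.
have w0 : 0 < w by exact: (lt_le_trans m0 mw).
have v0 : 0 < v by exact: (lt_le_trans w0 wv).
rewrite ge_min /powR !gt_eqF // !ler_expR.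
case: (leP 0 c) => hc.
  by apply/orP; left; apply: ler_wpM2l => //; rewrite ler_ln ?posrE.
by apply/orP; right; apply: ler_wnM2l; [exact: ltW | rewrite ler_ln ?posrE].
Qed.

Lemma h_pos_int (R : realType) (a u v : R) : 0 < a -> 0 <= u -> u < v ->
  0 < \int[lebesgue_measure]_(w in `[u, v]) (w `^ (a-1) * expR (- w)).
Proof.
move=> a0 u0 uv.
pose h := fun w : R => w `^ (a-1) * expR (- w).
pose m := (u + v) / 2.
have m0 : 0 < m by rewrite /m; lra.
have mv : m < v by rewrite /m; lra.
have um : u <= m by rewrite /m; lra.
pose c := Order.min (m `^ (a-1)) (v `^ (a-1)) * expR (- v).
have c0 : 0 < c.
  rewrite /c mulr_gt0 ?expR_gt0 // lt_min; apply/andP; split; apply: powR_gt0 => //.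
  exact: (lt_trans m0 mv).
have hint : lebesgue_measure.-integrable `[u, v] (EFin \o h).
  apply: (@integrableS _ _ _ lebesgue_measure `[u, +oo[) => //; last exact: integzy.
  by move=> x /=; rewrite !in_itv/= => /andP[-> _].
have mh : measurable_fun `[u, v] (EFin \o h).
  by apply: measurable_funTS; apply/measurable_EFinP; exact: h_meas.
have h0 x : 0 <= h x by rewrite /h mulr_ge0 ?powR_ge0 ?expR_ge0.
apply: fine_gt0; apply/andP; split; last first.
  by have /fin_numPlt/andP[_ ->] := @integrable_fin_num _ _ _ lebesgue_measure _ (measurable_itv _) _ hint.
have L1 : (\int[lebesgue_measure]_(w in `[m, v]) (h w)%:E <=
           \int[lebesgue_measure]_(w in `[u, v]) (h w)%:E)%E.
  apply: ge0_subset_integral => //.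
    by move=> x _; rewrite lee_fin.
  by move=> x /=; rewrite !in_itv/= => /andP[mx ->]; rewrite (le_trans um mx).
have L2 : (\int[lebesgue_measure]_(w in `[m, v]) (cst c%:E) w <=
           \int[lebesgue_measure]_(w in `[m, v]) (h w)%:E)%E.
  apply: ge0_le_integral => //.
  - by move=> x _; rewrite lee_fin ltW.
  - apply: measurable_funTS; apply/measurable_EFinP; exact: h_meas.
  - move=> x /=; rewrite in_itv/= => /andP[mx xv]; rewrite lee_fin /c /h.
    apply: ler_pM; [ | exact: expR_ge0 | exact: powR_lb | ].
    + by rewrite le_min !powR_ge0.
    + by rewrite ler_expR lerN2.
rewrite integral_cst // in L2.
have E : lebesgue_measure_lebesgue_measure__canonical__measure_function_Measure R
    `[m, v]%classic = (v - m)%:E.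
  have := @lebesgue_measure_itv R `[m, v]; rewrite /= lte_fin mv -EFinB => H.
  exact: H.
rewrite E in L2.
apply: (lt_le_trans _ (le_trans L2 L1)).
by rewrite -EFinM lte_fin mulr_gt0 // subr_gt0.
Qed.

Lemma ug_split (R : realType) (a z1 z2 : R) : 0 < a -> 0 <= z1 -> z1 <= z2 ->
  upper_gamma a z1 =
  \int[lebesgue_measure]_(w in `[z1, z2]) (w `^ (a-1) * expR (- w)) + upper_gamma a z2.
Proof.
move=> a0 z10 z12.
have z20 : 0 <= z2 by exact: (le_trans z10 z12).
have I1 := @integzy R a z1 a0 z10.
have := @Rintegral_itvB R (fun w => w `^ (a-1) * expR (- w)) (BLeft z1) (BInfty _ false) z2 I1.
rewrite bnd_simp z12 => /(_ erefl erefl) E.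
have E2 := @Rintegral_itv_obnd_cbnd R z2 (BInfty _ false) (fun w => w `^ (a-1) * expR (- w)).
rewrite /upper_gamma -E2; last first.
  apply: (@integrableS _ _ _ lebesgue_measure `[z2, +oo[) => //; last exact: integzy.
  by move=> x /=; rewrite !in_itv/= !andbT => /ltW.
by rewrite -E [RHS]addrC subrK.
Qed.

Lemma ug_lt (R : realType) (a z1 z2 : R) : 0 < a -> 0 <= z1 -> z1 < z2 ->
  upper_gamma a z2 < upper_gamma a z1.
Proof.
move=> a0 z10 z12.
rewrite (@ug_split R a z1 z2 a0 z10 (ltW z12)) ltrDr.
exact: h_pos_int.
Qed.

Lemma ug_gt0 (R : realType) (a z : R) : 0 < a -> 0 <= z -> 0 < upper_gamma a z.
Proof.
move=> a0 z0.
rewrite (@ug_split R a z (z + 1) a0 z0 (ler_wpDr ler01 (lexx z))).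
apply: ltr_pwDl.
  by apply: h_pos_int => //; rewrite ltrDl.
apply: Rintegral_ge0 => x _; rewrite mulr_ge0 ?powR_ge0 ?expR_ge0 //.
Qed.

Lemma integrand_id (R : realType) (q al A v : R) : 0 < q -> al != 2 -> 0 < v ->
  `|(al - 2) * v| `^ (1 / (al - 2)) * (A * expR (- (v `^ q))) =
  (A / q * `|al - 2| `^ (1 / (al - 2))) *
  ((v `^ q) `^ ((al - 1) / ((al - 2) * q) - 1) * expR (- v `^ q) * (q * v `^ (q - 1))).
Proof.
move=> q0 al2 v0.
have al20 : al - 2 != 0 by rewrite subr_eq0.
rewrite normrM (gtr0_norm v0) powRM ?normr_ge0 ?(ltW v0) //.
rewrite -powRrM.
have PQ : v `^ (q * ((al - 1) / ((al - 2) * q) - 1)) * v `^ (q - 1) = v `^ (1 / (al - 2)).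
  rewrite -powRD; last by rewrite (gt_eqF v0) implybT.
  by congr powR; field; rewrite al20 gt_eqF.
by rewrite -PQ; field; rewrite gt_eqF.
Qed.

Lemma G_cont (R : realType) (q b t : R) : 0 < t ->
  {for t, continuous (fun t : R => (t `^ q) `^ b * expR (- t `^ q) * (q * t `^ (q - 1)))}.
Proof.
move=> t0.
have tq : 0 < t `^ q by apply: powR_gt0.
apply: (@continuousM R R (fun t => (t `^ q) `^ b * expR (- t `^ q)) (fun t => q * t `^ (q - 1))).
  apply: (@continuousM R R (fun t => (t `^ q) `^ b) (fun t => expR (- t `^ q))).
    apply: (@continuous_comp _ _ _ (fun t => t `^ q) (fun y => y `^ b)).
      exact: powR_cont.
    exact: powR_cont.
  apply: (@continuous_comp _ _ _ (fun t => - t `^ q) expR); last exact: continuous_expR.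
  apply: (@continuous_comp _ _ _ (fun t => t `^ q) (fun y => - y)).
    exact: powR_cont.
  exact: continuousN.
apply: (@continuousM R R (fun=> q) (fun y => y `^ (q-1)) t); first exact: cvg_cst.
exact: powR_cont.
Qed.

Lemma int_sub (R : realType) (p al u v : R) : 0 < pstar p -> al != 2 -> 0 < u -> u <= v ->
  \int[lebesgue_measure]_(t in `[u, v]) (`|(al - 2) * t| `^ (1 / (al - 2)) * g_p1 p t) =
  (a_p1 p / pstar p * `|al - 2| `^ (1 / (al - 2))) *
  \int[lebesgue_measure]_(w in `[u `^ pstar p, v `^ pstar p])
     (w `^ ((al - 1) / ((al - 2) * pstar p) - 1) * expR (- w)).
Proof.
move=> q0 al2 u0 uv.
rewrite (@eq_Rintegral _ _ _ lebesgue_measure _ (fun t => (a_p1 p / pstar p * `|al - 2| `^ (1 / (al - 2))) *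
  ((t `^ pstar p) `^ ((al - 1) / ((al - 2) * pstar p) - 1) * expR (- t `^ pstar p) *
   (pstar p * t `^ (pstar p - 1))))); last first.
  move=> t; rewrite inE/= in_itv/= => /andP[ut _].
  rewrite /g_p1; apply: integrand_id => //.
  exact: (lt_le_trans u0 ut).
rewrite RintegralZl //; last first.
  apply: continuous_compact_integrable; first exact: segment_compact.
  apply: continuous_in_subspaceT => t; rewrite inE/= in_itv/= => /andP[ut _].
  apply: G_cont; exact: (lt_le_trans u0 ut).
congr (_ * _); rewrite /Rintegral; congr fine; symmetry.
exact: subst_pow.
Qed.

Lemma chvar_eq (R : realType) (p al x0 x : R) : 0 < pstar p -> al != 2 ->
  0 < (al - 1) / ((al - 2) * pstar p) -> 0 < x0 -> 0 < x ->
  chvar al (g_p1 p) x0 x =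
  (a_p1 p / pstar p * `|al - 2| `^ (1 / (al - 2))) *
  (upper_gamma ((al - 1) / ((al - 2) * pstar p)) (x `^ pstar p) -
   upper_gamma ((al - 1) / ((al - 2) * pstar p)) (x0 `^ pstar p)).
Proof.
move=> q0 al2 a0 x00 x0'.
rewrite /chvar /oint; case: ifPn => hx.
- rewrite int_sub //.
  have hq : x `^ pstar p <= x0 `^ pstar p.
    apply: ge0_ler_powR; [exact: ltW | rewrite nnegrE; exact: ltW | rewrite nnegrE; exact: ltW | exact: hx].
  rewrite (@ug_split R _ _ _ a0 (powR_ge0 _ _) hq).
  by congr (_ * _); rewrite addrK.
- have hx' : x0 <= x by rewrite ltW // ltNge.
  rewrite int_sub //.
  have hq : x0 `^ pstar p <= x `^ pstar p.
    apply: ge0_ler_powR; [exact: ltW | rewrite nnegrE; exact: ltW | rewrite nnegrE; exact: ltW | exact: hx'].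
  rewrite (@ug_split R _ _ _ a0 (powR_ge0 _ _) hq).
  ring.
Qed.

Lemma ug_inj (R : realType) (a z1 z2 : R) : 0 < a -> 0 <= z1 -> 0 <= z2 ->
  upper_gamma a z1 = upper_gamma a z2 -> z1 = z2.
Proof.
move=> a0 z10 z20 E.
case: (ltgtP z1 z2) => // h.
- by have := @ug_lt R a z1 z2 a0 z10 h; rewrite E ltxx.
- by have := @ug_lt R a z2 z1 a0 z20 h; rewrite E ltxx.
Qed.

Theorem proposition11 (R : realType) (p alpha x0 : R)
  (hp : 0 < pstar p) (halpha : alpha < 1 \/ 2 < alpha) (hx0 : 0 < x0)
  (s : R) (hs : exists2 x : R, 0 < x & chvar alpha (g_p1 p) x0 x = s) :
  let a := (alpha - 1) / ((alpha - 2) * pstar p) in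
  let K := a_p1 p / pstar p * `|alpha - 2| `^ (1 / (alpha - 2)) in
  let s0 := K * upper_gamma a (x0 `^ pstar p) in
  up_transform alpha (g_p1 p) x0 s =
    `|alpha - 2| `^ (1 / (2 - alpha)) *
    `|upper_gamma_inv a ((s + s0) / K)| `^ (1 / (pstar p * (2 - alpha))).
Proof.
move=> a K s0.
have al2 : alpha != 2.
  by case: halpha => h; apply/negP => /eqP E; move: h; rewrite E; lra.
have al20 : alpha - 2 != 0 by rewrite subr_eq0.
have q0 : pstar p != 0 by rewrite gt_eqF.
have a2' : 2 - alpha != 0 by rewrite subr_eq0 eq_sym.
have a0 : 0 < a.
  have -> : a = (1 - alpha) / ((2 - alpha) * pstar p).
    by rewrite /a; field; rewrite q0 a2' al20.
  case: halpha => h.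
    by apply: divr_gt0; [lra | apply: mulr_gt0 => //; lra].
  have -> : (1 - alpha) / ((2 - alpha) * pstar p) = (alpha - 1) / ((alpha - 2) * pstar p).
    by field; rewrite q0 a2' al20.
  by apply: divr_gt0; [lra | apply: mulr_gt0 => //; lra].
have K0 : 0 < K.
  rewrite /K; apply: mulr_gt0; last first.
    by apply: powR_gt0; rewrite normr_gt0.
  apply: divr_gt0 => //; rewrite /a_p1; apply: divr_gt0 => //.
  apply: mulr_gt0 => //; rewrite /Gamma; apply: ug_gt0 => //.
  by rewrite div1r invr_gt0.
have CE y : 0 < y -> chvar alpha (g_p1 p) x0 y =
    K * (upper_gamma a (y `^ pstar p) - upper_gamma a (x0 `^ pstar p)).
  by move=> y0; apply: chvar_eq.
case: hs => x x0' xs.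
have xget_x : xget 0 [set y | 0 < y /\ chvar alpha (g_p1 p) x0 y = s] = x.
  apply: xget_unique; first by split.
  move=> y [y0 ys].
  have E : K * (upper_gamma a (y `^ pstar p) - upper_gamma a (x0 `^ pstar p)) =
      K * (upper_gamma a (x `^ pstar p) - upper_gamma a (x0 `^ pstar p)).
    exact: (etrans (esym (CE y y0)) (etrans ys (etrans (esym xs) (CE x x0')))).
  have E2 : upper_gamma a (y `^ pstar p) = upper_gamma a (x `^ pstar p).
    by move: E => /(mulfI (negbT (gt_eqF K0))) /addIr.
  have E3 := @ug_inj R a _ _ a0 (powR_ge0 _ _) (powR_ge0 _ _) E2.
  apply: (powR_injective hp) E3; rewrite nnegrE ltW //.
have sK : (s + s0) / K = upper_gamma a (x `^ pstar p).
  have -> : s + s0 = K * upper_gamma a (x `^ pstar p).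
    by rewrite -xs (CE x x0') /s0 mulrBr subrK.
  by rewrite mulrC mulKf // gt_eqF.
have ginv : upper_gamma_inv a ((s + s0) / K) = x `^ pstar p.
  rewrite sK /upper_gamma_inv; apply: xget_unique.
    by split => //; exact: powR_ge0.
  move=> z [z0 E]; apply: (@ug_inj R a _ _ a0 z0 (powR_ge0 _ _) E).
rewrite /up_transform xget_x ginv (ger0_norm (powR_ge0 x (pstar p))) -powRrM.
rewrite normrM (gtr0_norm x0') (powRM _ (normr_ge0 _) (ltW x0')).
have -> : pstar p * (1 / (pstar p * (2 - alpha))) = 1 / (2 - alpha).
  by field; rewrite q0 a2'.
by [].
Qed.
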